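(* Let $X$ be a Hausdorff space and $D\subseteq X$ a dense subset. If $D^{\mathfrak c}$ is relatively countably compact in $X^{\mathfrak c}$, then $[D]^{<\omega}\setminus\{\emptyset\}$ is relatively countably compact in $\operatorname{CL}(X)$ and $\operatorname{CL}(X)$ is pseudocompact.
   Context: A subset $Y$ of a space $Z$ is relatively countably compact in $Z$ if every countably infinite subset of $Y$ has an accumulation point in $Z$. $[D]^{<\omega}$ is the set of finite subsets of $D$ (nonempty finite subsets of a $T_1$ space are closed, hence points of $\operatorname{CL}(X)$). $\operatorname{CL}(X)$ is the set of nonempty closed subsets of $X$ with the Vietoris topology, generated by $A^+=\{F:F\subseteq A\}$ and $A^-=\{F:F\cap A\ne\emptyset\}$ for open $A\subseteq X$. Powers carry the product topology. Pseudocompact means every continuous real-valued function is bounded. *)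

(* Defs.v *)
From HB Require Import structures.
From mathcomp Require Import all_boot all_order all_algebra.
From mathcomp Require Import all_classical all_reals all_analysis.
From mathcomp Require Import Rstruct Rstruct_topology.
Set Implicit Arguments. Unset Strict Implicit. Unset Printing Implicit Defensive.
Import Order.TTheory GRing.Theory Num.Theory.
Local Open Scope classical_set_scope.
Local Open Scope ring_scope.

Definition rel_countably_compact (T : topologicalType) (Y : set T) : Prop :=
  forall Z : set T, Z `<=` Y -> (Z #= [set: nat])%card ->
    exists x : T, limit_point Z x.

Definition pseudocompact (T : topologicalType) : Prop :=
  forall f : T -> Rdefinitions.R, continuous f ->
    exists M : Rdefinitions.R, forall t, `|f t| <= M.

Record CL (X : topologicalType) := MkCL {
  CLset :> set X ;
  CLsetP : closed CLset /\ CLset !=set0 }.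

HB.instance Definition _ (X : topologicalType) := gen_eqMixin (CL X).
HB.instance Definition _ (X : topologicalType) := gen_choiceMixin (CL X).

(** Index type of the Vietoris subbase: (true, A) ~ A^+, (false, A) ~ A^-. *)
Definition vietoris_index (X : topologicalType) := (bool * set X)%type.
HB.instance Definition _ (X : topologicalType) :=
  gen_eqMixin (vietoris_index X).
HB.instance Definition _ (X : topologicalType) :=
  gen_choiceMixin (vietoris_index X).
HB.instance Definition _ (X : topologicalType) :=
  isPointed.Build (vietoris_index X) (true, setT).

Definition vietoris_subbase (X : topologicalType) (i : vietoris_index X)
  : set (CL X) :=
  if i.1 then [set F : CL X | (F : set X) `<=` i.2]
  else [set F : CL X | (F : set X) `&` i.2 !=set0].

Definition vietoris_dom (X : topologicalType) : set (vietoris_index X) :=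
  [set i | open i.2].

HB.instance Definition _ (X : topologicalType) :=
  isSubBaseTopological.Build (CL X) (@vietoris_dom X) (@vietoris_subbase X).

(** D^c as a subset of X^c, with c = |nat -> bool| = continuum,
    X^c carrying the product topology. *)
Definition power_set_c (X : topologicalType) (D : set X)
  : set {ptws (nat -> bool) -> X} :=
  [set f | forall i, D (f i)].

Definition fin_nonempty_subsets (X : topologicalType) (D : set X)
  : set (CL X) :=
  [set F : CL X | finite_set (F : set X) /\ (F : set X) `<=` D].

(* Main.v *)
Require Import Defs.
From HB Require Import structures.
From mathcomp Require Import all_boot all_order all_algebra.
From mathcomp Require Import all_classical all_reals all_analysis.
From mathcomp Require Import Rstruct Rstruct_topology finmap.
Set Implicit Arguments. Unset Strict Implicit. Unset Printing Implicit Defensive.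
Import Order.TTheory GRing.Theory Num.Theory.
Local Open Scope classical_set_scope.

Lemma inj_nat_of_card (T : Type) (Z : set T) : (Z #= [set: nat])%card ->
  exists g : nat -> T, injective g /\ forall n, Z (g n).
Proof.
rewrite card_eq_sym => /card_bijP [f bf].
have fi := bij_inj bf.
exists (fun n => val (f (exist _ n (mem_set (I : setT n))))); split.
  move=> a b /val_inj/fi [] //.
move=> n; exact: set_mem (valP (f _)).
Qed.

Lemma CL_eq (X : topologicalType) (A B : CL X) : (A : set X) = B -> A = B.
Proof.
case: A => A pA; case: B => B pB /= AB; subst B.
by rewrite (Prop_irrelevance pA pB).
Qed.

Lemma CL_sub_open (X : topologicalType) (i : vietoris_index X) :
  vietoris_dom i -> open (vietoris_subbase i).
Proof.
move=> di; exists [set vietoris_subbase i].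
  by move=> _ ->; apply: finI_from1.
by rewrite bigcup_set1.
Qed.

Lemma CL_nbhs (X : topologicalType) (G : CL X) (V : set (CL X)) : nbhs G V ->
  exists fs : {fset vietoris_index X},
   [/\ (forall t, t \in fs -> vietoris_dom t),
       (forall t, t \in fs -> vietoris_subbase t G) &
       \bigcap_(t in [set` fs]) vietoris_subbase t `<=` V].
Proof.
move=> [B [[DD sDD eB] BG BV]].
move: BG; rewrite -eB => -[C DDC CG].
have [fs sfs Cfs] := sDD _ DDC.
exists fs; split.
- move=> t tf; exact: set_mem (sfs t tf).
- by move=> t tf; move: CG => /=; rewrite -Cfs; apply.
- by move=> c cf; apply: BV; rewrite -eB; exists C => //=; rewrite -Cfs.
Qed.

Lemma nat_sel_surj (s : nat -> nat) : exists i : nat -> bool,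
  forall n, xget 0%N [set k | i (choice.pickle (n, k))] = s n.
Proof.
exists (fun p => if choice.unpickle p is Some nk then nk.2 == s nk.1 else false) => n.
apply: xget_unique => [|y]; rewrite /= choice.pickleK /=.
  by rewrite eqxx.
by move/eqP.
Qed.

Lemma ptws_nbhs (X : topologicalType) (I : eqType) (q : {ptws I -> X}) (c : I)
  (O : set X) : open O -> O (q c) -> nbhs q [set f : {ptws I -> X} | O (f c)].
Proof.
move=> oO Oq; exact: (@proj_continuous I (fun=> X) c q O (open_nbhs_nbhs (conj oO Oq))).
Qed.

Lemma part1 (X : topologicalType) (D : set X) : hausdorff_space X ->
  rel_countably_compact (power_set_c D) ->
  rel_countably_compact (fin_nonempty_subsets D).
Proof.
move=> hX H Z ZY ZN.
have [F [Finj ZF]] := inj_nat_of_card ZN.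
have FY n : fin_nonempty_subsets D (F n) := ZY _ (ZF n).
have ls n : {s : seq X | (F n : set X) = [set` s]}.
  by apply: cid; apply/finite_seqP; case: (FY n).
have dn n : {d : X | (F n : set X) d}.
  by apply: cid; case: (CLsetP (F n)) => _ [d Fd]; exists d.
pose e (i : nat -> bool) (n : nat) : nat := xget 0%N [set k : nat | i (choice.pickle ((n, k) : nat * nat))].
pose x n (i : nat -> bool) : X := nth (sval (dn n)) (sval (ls n)) (e i n).
have lsE n y : (F n : set X) y <-> (y \in sval (ls n)).
  by case: (ls n) => s /= ->.
have xF n i : (F n : set X) (x n i).
  rewrite /x; case: (ltnP (e i n) (size (sval (ls n)))) => h.
  - by apply/lsE; apply: mem_nth.
  - by rewrite nth_default //; exact: proj2_sig (dn n).
have xsel (g : nat -> X) : exists i, forall n, (F n : set X) (g n) -> x n i = g n.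
  have [i hi] := nat_sel_surj (fun n => index (g n) (sval (ls n))).
  exists i => n Fg; rewrite /x /e hi nth_index //.
  exact/lsE.
have xD n i : D (x n i) by case: (FY n) => _; apply; apply: xF.
pose xx : nat -> {ptws (nat -> bool) -> X} := x.
have xinj : injective xx.
  move=> n m xnm; apply: Finj; apply: CL_eq.
  have sub a b : xx a = xx b -> (F a : set X) `<=` F b.
    move=> xab y Fy; have [i hi] := xsel (fun=> y).
    by rewrite -(hi a Fy); have -> : x a i = xx b i by rewrite -xab.
  by apply/seteqP; split; apply: sub.
have Z'sub : range xx `<=` power_set_c D by move=> _ [n _ <-] i; apply: xD.
have Z'card : (range xx #= [set: nat])%card.
  by apply: inj_card_eq => a b _ _; apply: xinj.
have [q qlim] := H _ Z'sub Z'card.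
have Gcl : closed (closure (range q)) /\ closure (range q) !=set0.
  split; first exact: closed_closure.
  by exists (q (fun=> true)); apply: subset_closure; exists (fun=> true).
pose G := MkCL Gcl.
exists G => V /CL_nbhs [fs [fsD fsG fsV]].
have ex_t (t : vietoris_index X) : exists cO : (nat -> bool) * set X,
   t \in fs -> [/\ open cO.2, cO.2 (q cO.1) &
     forall n, cO.2 (x n cO.1) -> vietoris_subbase t (F n)].
  case: (boolP (t \in fs)) => tfs; last by exists ((fun=> true), setT).
  have oA := fsD _ tfs; have Gt := fsG _ tfs.
  case: t tfs oA Gt => -[] A tfs; rewrite /vietoris_dom /vietoris_subbase /= => oA Gt.
  - pose g n := if pselect (exists y, (F n : set X) y /\ ~ A y) is left h
      then sval (cid h) else sval (dn n).
    have [i hi] := xsel g.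
    exists (i, A) => _; split => //=.
      by apply: Gt; apply: subset_closure; exists i.
    move=> n xA y Fy; apply: contrapT => nAy.
    have ex : exists y, (F n : set X) y /\ ~ A y by exists y.
    have [gF gA] : (F n : set X) (g n) /\ ~ A (g n).
      by rewrite /g; case: pselect => [h|//]; exact: (proj2_sig (cid h)).
    by apply: gA; rewrite -hi.
  - case: Gt => z [Gz Az].
    have [_ [[i _ <-] Aqi]] := Gz A (open_nbhs_nbhs (conj oA Az)).
    exists (i, A) => _; split => //= n xA; exists (x n i); split => //; exact: xF.
have [cO hcO] := choice ex_t.
pose W := \bigcap_(t in [set` fs])
   (fun f : {ptws (nat -> bool) -> X} => (cO t).2 (f (cO t).1)).
have nW : nbhs q W.
  apply: filter_bigI => t tfs; have [oO Oq _] := hcO t tfs.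
  exact: ptws_nbhs.
have [S [nS hS]] : exists S : set {ptws (nat -> bool) -> X},
    nbhs q S /\ forall n, S (xx n) -> xx n != q -> F n != G.
  case: (pselect (exists m, F m = G /\ xx m != q)) => [[m [FmG xmq]]|nex].
  - have [j xj] : exists j, x m j != q j.
      apply: contrapT => nj; move/eqP: xmq; apply; apply: funext => j.
      by apply: contrapT => h; apply: nj; exists j; apply/eqP.
    exists ((fun f : {ptws (nat -> bool) -> X} => f j) @^-1` (~` [set x m j])); split.
    + apply: ptws_nbhs.
        exact/closed_openC/accessible_closed_set1/hausdorff_accessible.
      by move=> /= qx; move: xj; rewrite qx eqxx.
    + move=> n /= Sn _; apply/eqP => FnG; apply: Sn.
      have nm : n = m by apply: Finj; rewrite FnG FmG.
      by rewrite nm.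
  - exists setT; split; first exact: filterT.
    move=> n _ xnq; apply/eqP => FnG; apply: nex; exists n; split => //.
have [y [yq [n _ ny] [Wy Sy]]] := qlim _ (filterI nW nS).
subst y.
exists (F n); split.
- exact: hS.
- exact: ZF.
- apply: fsV => t tfs; have [_ _ h] := hcO t tfs; apply: h; exact: Wy t tfs.
Qed.

From mathcomp Require Import lra.
Local Open Scope ring_scope.

Lemma dense_nbhs (X : topologicalType) (D : set X) : dense D ->
  forall (z : X) (W : set X), nbhs z W -> exists d, D d /\ W d.
Proof.
move=> dD z W; rewrite nbhsE => -[B [oB Bz] BW].
have [d [Bd Dd]] := dD B (ex_intro _ z Bz) oB.
by exists d; split => //; apply: BW.
Qed.

Lemma CL_dense (X : topologicalType) (D : set X) : hausdorff_space X -> dense D ->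
  forall (t : CL X) (V : set (CL X)), nbhs t V ->
  exists c, fin_nonempty_subsets D c /\ V c.
Proof.
move=> hX dD t V /CL_nbhs [fs [fsD fst fsV]].
pose U0 := [set z : X | forall s, s \in fs -> s.1 -> s.2 z].
have nU0 z : (t : set X) z -> nbhs z U0.
  move=> tz.
  apply: (@filterS _ _ _ (\bigcap_(s in [set` fs])
     (fun s : vietoris_index X => if s.1 then s.2 else setT) s)).
    by move=> w Hw s sfs s1; have := Hw s sfs; rewrite s1.
  apply: filter_bigI => s sfs; case: s sfs => -[] A sfs /=; last exact: filterT.
  have oA := fsD _ sfs; have tA := fst _ sfs.
  by apply: open_nbhs_nbhs; split => //; apply: tA.
have [z0 tz0] := (CLsetP t).2.
have [d0 [Dd0 Ud0]] := dense_nbhs dD (nU0 _ tz0).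
have ex_s (s : vietoris_index X) :
    exists y, [/\ D y, U0 y & (s \in fs -> ~~ s.1 -> s.2 y)].
  case: (boolP (s \in fs)) => sfs; last by exists d0.
  case: s sfs => -[] A sfs; first by exists d0.
  have oA := fsD _ sfs; have [z [tz Az]] := fst _ sfs.
  have [y [Dy [Uy Ay]]] :=
    dense_nbhs dD (filterI (nU0 _ tz) (open_nbhs_nbhs (conj oA Az))).
  by exists y.
have [d hd] := choice ex_s.
pose Fs := d @` [set` fs] `|` [set d0].
have FsF : finite_set Fs.
  by rewrite /Fs finite_setU; split; [apply: finite_image; apply: finite_fset|apply: finite_set1].
have Fscl : closed Fs /\ Fs !=set0.
  split; first exact: (accessible_finite_set_closed.1 (hausdorff_accessible hX) _ FsF).
  by exists d0; right.
exists (MkCL Fscl); split.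
- split => //= y [[s _ <-]|->] //; by case: (hd s).
- apply: fsV => s sfs /=; rewrite /vietoris_subbase; case: s sfs => -[] A sfs /=.
  + move=> y [[s' s'fs <-]|->].
      by case: (hd s') => _ U _; apply: U sfs _.
    by apply: Ud0 sfs _.
  + exists (d (false, A)); split; first by left; exists (false, A).
    by case: (hd (false, A)) => _ _; apply.
Qed.

Lemma part2 (X : topologicalType) (D : set X) : hausdorff_space X -> dense D ->
  rel_countably_compact (fin_nonempty_subsets D) -> pseudocompact (CL X).
Proof.
move=> hX dD rcc f cf.
apply: contrapT => nb.
have big (r : Rdefinitions.R) :
    exists c : CL X, fin_nonempty_subsets D c /\ r < `|f c|.
  have [t ht] : exists t, r + 1 < `|f t|.
    apply: contrapT => h; apply: nb; exists (r + 1) => t.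
    by rewrite leNgt; apply/negP => ht; apply: h; exists t.
  have nV : nbhs t (f @^-1` ball (f t) 1) by apply: cf; apply: nbhsx_ballx.
  have [c [Yc Vc]] := CL_dense hX dD nV.
  exists c; split => //.
  move: Vc; rewrite /ball /= => Vc.
  have := lerB_dist (f t) (f c); lra.
have [h hh] := choice big.
pose y k := iter k (fun c => h (`|f c| + 1)) (h 0).
have yS k : y k.+1 = h (`|f (y k)| + 1) by [].
have Yy k : fin_nonempty_subsets D (y k).
  by case: k => [|k]; [case: (hh 0)| rewrite yS; case: (hh (`|f (y k)| + 1))].
have ystep k : `|f (y k)| + 1 < `|f (y k.+1)|.
  by rewrite yS; case: (hh (`|f (y k)| + 1)).
have ygt k : k%:R < `|f (y k)|.
  elim: k => [|k IH]; first by case: (hh 0).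
  have := ystep k; rewrite -GRing.natr1; lra.
have ymono k m : (k < m)%N -> `|f (y k)| < `|f (y m)|.
  elim: m => [//|m IH]; rewrite ltnS leq_eqVlt => /orP[/eqP->|/IH hk].
    by have := ystep m; lra.
  by have := ystep m; lra.
have yinj : injective y.
  move=> a b yab; apply/eqP; apply: contraT; rewrite neq_ltn => /orP[] /ymono;
  by rewrite yab ltxx.
have Zsub : range y `<=` fin_nonempty_subsets D by move=> _ [k _ <-].
have Zcard : (range y #= [set: nat])%card.
  by apply: inj_card_eq => a b _ _; apply: yinj.
have [p plim] := rcc _ Zsub Zcard.
have [N NP] : exists N : nat, `|f p| + 1 < N%:R.
  by exists (Num.Def.trunc (`|f p| + 1)).+1; exact: truncnS_gt.
have sep (A B : CL X) : A != B -> exists O : set (CL X), [/\ open O, O A & ~ O B].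
  move=> AB.
  have [z hz] : exists z, ~ ((A : set X) z <-> (B : set X) z).
    apply: contrapT => nz; move/eqP: AB; apply; apply: CL_eq.
    apply/seteqP; split => w Hw; apply: contrapT => nw; apply: nz; exists w; tauto.
  case: (pselect ((A : set X) z)) => Az.
  - have nBz : ~ (B : set X) z by tauto.
    exists (vietoris_subbase (false, ~` (B : set X))); split.
    + apply: CL_sub_open; rewrite /vietoris_dom /=; apply: closed_openC.
      exact: (CLsetP B).1.
    + by exists z.
    + by case => w [Bw nBw].
  - have Bz : (B : set X) z by tauto.
    exists (vietoris_subbase (true, ~` [set z])); split.
    + apply: CL_sub_open; rewrite /vietoris_dom /=.
      exact/closed_openC/accessible_closed_set1/hausdorff_accessible.
    + by move=> w Aw /= wz; apply: Az; rewrite -wz.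
    + by rewrite /vietoris_subbase /= => /(_ z Bz); apply.
have PN M : nbhs p [set c | forall k, (k < M)%N -> y k != p -> c != y k].
  elim: M => [|M IH]; first by apply: filterS filterT => c _ k.
  case: (boolP (y M != p)) => yMp.
  - have [Q [oO Op nO]] : exists Q : set (CL X), [/\ open Q, Q p & ~ Q (y M)].
      by apply: sep; rewrite eq_sym.
    apply: (filterS _ (filterI IH (open_nbhs_nbhs (conj oO Op)))).
    move=> c [Hc Oc] k; rewrite ltnS leq_eqVlt => /orP[/eqP->|kM] ykp.
      by apply/eqP => cy; apply: nO; rewrite -cy.
    exact: Hc.
  - apply: filterS IH => c Hc k; rewrite ltnS leq_eqVlt => /orP[/eqP->|kM] ykp.
      by move: yMp; rewrite ykp.
    exact: Hc.
have nV : nbhs p (f @^-1` ball (f p) 1) by apply: cf; apply: nbhsx_ballx.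
have [c [cp [k _ yk] [Vc Pc]]] := plim _ (filterI nV (PN N)).
subst c.
have kN : (N <= k)%N.
  by rewrite leqNgt; apply/negP => kN; have := Pc k kN cp; rewrite eqxx.
have := ygt k; have : (N%:R <= k%:R :> Rdefinitions.R) by rewrite ler_nat.
move: Vc; rewrite /ball /= => Vc.
have := lerB_dist (f (y k)) (f p); rewrite distrC; lra.
Qed.

Theorem theorem3p2 (X : topologicalType) (D : set X) :
  hausdorff_space X -> dense D ->
  rel_countably_compact (power_set_c D) ->
  rel_countably_compact (fin_nonempty_subsets D) /\ pseudocompact (CL X).
Proof.
move=> hX dD H; have h1 := part1 hX H; split => //.
exact: part2 hX dD h1.
Qed.
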